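(* Let $\mathcal{H}=(V,E)$ be a hypergraph, and consider the mixed integer linear program with variables $w_R\in[0,1]$ for each $R\in E$ and $t_x\in\{0,1\}$ for each $x\in V$: maximize $\sum_{R\in E}w_R$ subject to (a) for all $x\in V$: $\sum_{R\in E: x\in R}w_R\le t_x+(1-t_x)L$; (b) for all $R\in E$: $w_R\le\sum_{x\in R}t_x$; (c) for all $U,W\in E$ and all $y\in U\setminus W$: $w_W\le 1+\sum_{x\in W\setminus U}t_x-t_y$. Then the optimal objective value of this program is $\kappa(\mathcal{H})$.
   Context: $L$ is a fixed large number (large enough that constraint (a) is vacuous when $t_x=0$, e.g. $L\ge|E|$). $\mathcal{H}[S]$ is the hypergraph with vertex set $S$ and edges $\{S\cap e: e\in E, S\cap e\ne\emptyset\}$; $\mathsf{red}$ removes every edge $e$ contained in another edge $e'\ne e$. $\tau^*$ is the value of a maximum fractional edge packing (equivalently, minimum fractional vertex cover). $\kappa(\mathcal{H})=\max_{S\subseteq V}\tau^*(\mathsf{red}(\mathcal{H}[S]))$. *)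

(* Defs.v *)
From HB Require Import structures.
From mathcomp Require Import all_boot all_order all_algebra.
From mathcomp Require Import classical_sets reals.
Set Implicit Arguments. Unset Strict Implicit. Unset Printing Implicit Defensive.
Import Order.TTheory GRing.Theory Num.Theory.
Local Open Scope ring_scope.

(* Induced hypergraph H[S]: edges { S ∩ e : e ∈ E, S ∩ e ≠ ∅ }
   (vertex set S; vertices play no role in tau* beyond the edges). *)
Definition induced {V : finType} (E : {set {set V}}) (S : {set V})
  : {set {set V}} :=
  [set S :&: e | e in E & S :&: e != finset.set0].

Definition red {V : finType} (F : {set {set V}}) : {set {set V}} :=
  [set e in F | [forall e' in F, (e' != e) ==> ~~ (e \subset e')]].

Definition frac_packing {R : realType} {V : finType} (F : {set {set V}})
  (y : {set V} -> R) : Prop :=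
  (forall e, e \in F -> 0 <= y e) /\
  (forall v : V, \sum_(e in F | v \in e) y e <= 1).

Definition tau_star {R : realType} {V : finType} (F : {set {set V}}) : R :=
  sup [set (\sum_(e in F) y e) | y in [set y | @frac_packing R V F y]]%classic.

Definition kappa {R : realType} {V : finType} (E : {set {set V}}) : R :=
  \big[Num.max/0]_(S : {set V}) tau_star (red (induced E S)).

Definition milp_feasible {R : realType} {V : finType} (E : {set {set V}})
  (L : R) (w : {set V} -> R) (t : V -> bool) : Prop :=
  (forall e, e \in E -> 0 <= w e <= 1) /\
  (forall x : V, \sum_(e in E | x \in e) w e
                   <= (t x)%:R + (1 - (t x)%:R) * L) /\
  (forall e, e \in E -> w e <= \sum_(x in e) (t x)%:R) /\
  (forall U W, U \in E -> W \in E -> forall y, y \in U :\: W ->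
     w W <= 1 + \sum_(x in W :\: U) (t x)%:R - (t y)%:R).

Definition milp_obj {R : realType} {V : finType} (E : {set {set V}})
  (w : {set V} -> R) : R := \sum_(e in E) w e.

(* Main.v *)
Require Import Defs.
From HB Require Import structures.
From mathcomp Require Import all_boot all_order all_algebra.
From mathcomp Require Import classical_sets reals.
From mathcomp Require Import all_classical all_reals topology normedtype derive.
Import Order.TTheory GRing.Theory Num.Theory.
Local Open Scope ring_scope.
Import numFieldNormedType.Exports.

Section Helpers.
Variables (R : realType).

Lemma sub_sum (I : finType) (P Q : pred I) (f : I -> R) :
  (forall i, P i -> Q i) -> (forall i, Q i -> 0 <= f i) ->
  \sum_(i | P i) f i <= \sum_(i | Q i) f i.
Proof.
move=> PQ f0; rewrite [X in _ <= X](bigID P) /=.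
have -> : \sum_(i | Q i && P i) f i = \sum_(i | P i) f i.
  apply: eq_bigl => i; case Pi: (P i); rewrite ?andbT ?andbF //; exact: PQ.
rewrite lerDl; apply: sumr_ge0 => i /andP [Qi _]; exact: f0.
Qed.

Lemma bigmax_ub (I : eqType) (s : seq I) (F : I -> R) i :
  i \in s -> F i <= \big[Num.max/0]_(j <- s) F j.
Proof.
elim: s => [|j s IH] //; rewrite inE big_cons => /orP [/eqP ->|/IH h].
  by rewrite le_max lexx.
by rewrite le_max h orbT.
Qed.

Lemma bigmax_att (I : eqType) (s : seq I) (F : I -> R) :
  \big[Num.max/0]_(j <- s) F j = 0 \/
  exists2 i, i \in s & \big[Num.max/0]_(j <- s) F j = F i.
Proof.
elim: s => [|j s IH]; first by left; rewrite big_nil.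
rewrite big_cons; case: lerP => h.
  case: IH => [->|[i si ->]]; first by left.
  by right; exists i => //; rewrite inE si orbT.
by right; exists j => //; rewrite inE eqxx.
Qed.
End Helpers.

Section Attain.
Import ArrowAsProduct.
Local Open Scope classical_set_scope.

Lemma sum_cont (R : realType) (I : finType) (P : pred I) (s : seq I) :
  continuous (fun f : (I -> R) => \sum_(i <- s | P i) f i).
Proof.
elim: s => [|i s IH].
  have -> : (fun f : (I -> R) => \sum_(i <- [::] | P i) f i) = (fun=> 0).
    by apply: funext => f; rewrite big_nil.
  exact: cst_continuous.
case Pi: (P i).
  have -> : (fun f : (I -> R) => \sum_(j <- i :: s | P j) f j) =
     (fun f : (I -> R) => f i) + (fun f => \sum_(j <- s | P j) f j).
    by apply: funext => f; rewrite big_cons Pi.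
  move=> f; apply: continuousD; [by have := @proj_continuous _ (fun=> R) i f | exact: IH].
have -> : (fun f : (I -> R) => \sum_(j <- i :: s | P j) f j) =
     (fun f => \sum_(j <- s | P j) f j).
  by apply: funext => f; rewrite big_cons Pi.
exact: IH.
Qed.

Lemma pack_le1 (R : realType) (V : finType) (F : {set {set V}}) (y : {set V} -> R) e :
  frac_packing F y -> e \in F -> e != finset.set0 -> y e <= 1.
Proof.
move=> [y0 y1] eF /set0Pn [v ve].
apply: le_trans (y1 v).
rewrite (bigD1 e) /=; last by rewrite eF ve.
rewrite lerDl; apply: sumr_ge0 => i /andP [/andP [iF _] _]; exact: y0.
Qed.

Lemma attain (R : realType) (V : finType) (F : {set {set V}}) :
  (forall e, e \in F -> e != finset.set0) ->
  exists y : {set V} -> R, [/\ frac_packing F y, \sum_(e in F) y e = tau_star F &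
    forall y', frac_packing F y' -> \sum_(e in F) y' e <= \sum_(e in F) y e].
Proof.
move=> Fne.
pose A : {set V} -> set R := fun i => if i \in F then `[0, 1]%classic else (fun x => x = 0).
pose K : set ({set V} -> R) := fun f => forall i, A i (f i).
pose Q : set ({set V} -> R) := fun f => forall v, \sum_(e in F | v \in e) f e <= 1.
have cK : compact K.
  apply: tychonoff => i; rewrite /A; case: (i \in F).
    exact: segment_compact.
  have -> : (fun x : R => x = 0) = [set (0:R)]%classic by [].
  exact: compact_set1.
have cQ : closed Q.
  have -> : Q = classical_sets.bigcap (fun _ : V => True) (fun v => (fun f : {set V} -> R => \sum_(e in F | v \in e) f e <= 1)).
    apply: funext => f; apply: propext; split.
      by move=> Qf v _; exact: Qf.
    by move=> H v; exact: H.
  apply: closed_bigI => v _.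
  apply: (@preimage_closed _ _ (fun f : {set V} -> R => \sum_(e in F | v \in e) f e) (fun x => x <= 1)).
    move=> f _; exact: sum_cont.
  exact: closed_le.
have cP : compact (K `&` Q) by exact: compact_closedI.
have nP : (K `&` Q) !=set0.
  exists (fun=> 0); split.
    by move=> i; rewrite /A; case: (i \in F) => //=; rewrite in_itv /= lexx ler01.
  by move=> v; rewrite big1 // ler01.
have cf : {within K `&` Q, continuous (fun f : {set V} -> R => \sum_(e in F) f e)}.
  apply: continuous_subspaceT => f; exact: sum_cont.
have [c cP' cmax] := compact_EVT_max nP cP cf.
move: cP; rewrite inE in cP'; case: cP' => cK' cQ' _.
have packc : frac_packing F c.
  split => [e eF|v]; last exact: cQ'.
  by have := cK' e; rewrite /A eF /= in_itv /= => /andP [].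
have ub : forall y, frac_packing F y -> \sum_(e in F) y e <= \sum_(e in F) c e.
  move=> y py.
  pose y' := fun e => if e \in F then y e else 0.
  have -> : \sum_(e in F) y e = \sum_(e in F) y' e.
    by apply: eq_bigr => e eF; rewrite /y' eF.
  apply: cmax; rewrite inE; split.
    move=> i; rewrite /A /y'; case iF: (i \in F) => //=.
    by rewrite in_itv /= (@pack_le1 _ _ F y i py iF (Fne _ iF)) andbT; case: py => + _; apply.
  move=> v; apply: le_trans (proj2 py v); rewrite le_eqVlt; apply/orP; left; apply/eqP.
  by apply: eq_bigr => e /andP [eF _]; rewrite /y' eF.
exists c; split => //.
apply/le_anti/andP; split.
  apply: ub_le_sup.
    exists (\sum_(e in F) c e) => x [y py <-]; exact: ub.
  by exists c.
apply: ge_sup; first by exists (\sum_(e in F) c e), c.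
move=> x [y py <-]; exact: ub.
Qed.
End Attain.

Section Main.
Variables (R : realType) (V : finType) (E : {set {set V}}).

Lemma regroup (g : {set V} -> R) (p : {set V} -> {set V}) (Fr : {set {set V}})
  (P : pred {set V}) :
  \sum_(e in Fr | P e) \sum_(W in E | p W == e) g W =
  \sum_(W in E | (p W \in Fr) && P (p W)) g W.
Proof.
rewrite [RHS](partition_big p (fun e => (e \in Fr) && P e)); last by move=> W /andP [].
apply: eq_bigr => e /andP [eF Pe]; apply: eq_bigl => W.
have [pe|_] := eqVneq (p W) e; last by rewrite !andbF.
by rewrite pe eF Pe !andbT.
Qed.

Lemma mem_induced S e :
  reflect (exists2 W, W \in E & (S :&: W != finset.set0) /\ e = S :&: W)
    (e \in induced E S).
Proof.
apply: (iffP imsetP) => [[W] | [W WE [ne ->]]].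
  by rewrite inE => /andP [WE ne] ->; exists W.
by exists W => //; rewrite inE WE ne.
Qed.

Lemma red_induced S e : e \in red (induced E S) ->
  [/\ e \in induced E S, e != finset.set0 &
    forall e', e' \in induced E S -> e' != e -> ~~ (e \subset e')].
Proof.
rewrite inE => /andP [eI /forallP H]; split => //.
  by case/mem_induced: eI => W _ [ne ->].
by move=> e' e'I ne'; have := H e'; rewrite e'I ne'.
Qed.


Lemma upper (L : R) (w : {set V} -> R) (t : V -> bool) :
  milp_feasible E L w t -> milp_obj E w <= kappa E.
Proof.
move=> [w01 [ha [hb hc]]].
pose T := [set x | t x].
have tT : forall x, (x \in T) = t x by move=> x; rewrite inE.
pose Fr := red (induced E T).
pose y := fun e => \sum_(W in E | T :&: W == e) w W.
have w0 : forall W, W \in E -> 0 <= w W by move=> W /w01 /andP [].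
have zero : forall W, W \in E -> T :&: W \notin Fr -> w W = 0.
  move=> W WE nF; apply/le_anti; rewrite w0 // andbT.
  have [e0|ne] := eqVneq (T :&: W) finset.set0.
    apply: le_trans (hb W WE) _; rewrite big1 // => x xW.
    case tx: (t x) => //; move/setP: e0 => /(_ x); rewrite !inE tx xW //.
  have WI : T :&: W \in induced E T by apply/mem_induced; exists W.
  move: nF; rewrite inE WI /= => /forallPn [e' ].
  rewrite negb_imply => /andP [e'I]; rewrite negb_imply negbK => /andP [ne' sub].
  case/mem_induced: e'I => U UE [_ e'E].
  have : ~~ (e' \subset T :&: W).
    apply/negP => sub'; move: ne'; rewrite eq_sym.
    by rewrite finset.eqEsubset sub sub'.
  case/subsetPn => z ze' zn.
  move: ze'; rewrite e'E inE => /andP [zT zU].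
  have zW : z \notin W by move: zn; rewrite inE zT.
  have := hc U W UE WE z; rewrite inE zW zU => /(_ isT).
  rewrite -tT zT big1 ?addr0 ?subrr //.
  move=> x; rewrite inE => /andP [xU xW].
  case tx: (t x) => //.
  have : x \in e' by apply: (fintype.subsetP sub); rewrite inE tT tx xW.
  by rewrite e'E inE (negbTE xU) andbF.
have packy : frac_packing Fr y.
  split => [e _|v]; first by apply: sumr_ge0 => W /andP [WE _]; exact: w0.
  rewrite (regroup w (fun W => T :&: W) Fr (fun e => v \in e)).
  case tv: (t v).
    apply: le_trans (@sub_sum R _ _ (fun W => (W \in E) && (v \in W)) w _ _) _.
    - by move=> W /andP [-> /andP [_]]; rewrite inE => /andP [].
    - by move=> W /andP [WE _]; exact: w0.
    by have := ha v; rewrite tv subrr mul0r addr0.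
  rewrite big1 ?ler01 // => W /andP [_ /andP [_]].
  by rewrite inE tT tv.
have Fne : forall e, e \in Fr -> e != finset.set0.
  by move=> e /red_induced [].
have [c [pc ceq cub]] := @attain R _ _ Fne.
apply: (@le_trans _ _ (\sum_(e in Fr) y e)).
  rewrite /milp_obj (bigID (fun W => T :&: W \in Fr)) /=.
  rewrite [X in _ + X]big1 ?addr0; last by move=> W /andP [WE nF]; exact: zero.
  rewrite le_eqVlt; apply/orP; left; apply/eqP; rewrite /y.
  transitivity (\sum_(e in Fr | predT e) \sum_(W in E | T :&: W == e) w W);
    last by apply: eq_bigl => e; rewrite andbT.
  by rewrite regroup; apply: eq_bigl => W; rewrite andbT.
apply: le_trans (cub _ packy) _; rewrite ceq.
rewrite /kappa; apply: (@bigmax_ub R _ _ (fun S => tau_star (red (induced E S)))).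
exact: mem_index_enum.
Qed.


Lemma lower (L : R) (hL : (#|E|%:R : R) <= L) :
  exists (w : {set V} -> R) (t : V -> bool),
      milp_feasible E L w t /\ milp_obj E w = kappa E.
Proof.
have L0 : 0 <= L by apply: le_trans hL; exact: ler0n.
case: (@bigmax_att R _ (index_enum {set V})
   (fun S => tau_star (red (induced E S)))) => [k0 | [S _ kS]].
  exists (fun=> 0), (fun=> false); split; last by rewrite /milp_obj big1 // /kappa k0.
  split; first by move=> e _; rewrite lexx ler01.
  split; first by move=> x; rewrite big1 //= subr0 mul1r add0r.
  split; first by move=> e _; rewrite big1.
  by move=> U W _ _ z _; rewrite big1 //= addr0 subr0 ler01.
pose Fr := red (induced E S).
have Fne : forall e, e \in Fr -> e != finset.set0 by move=> e /red_induced [].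
have [y [py yeq _]] := @attain R _ _ Fne.
pose g := fun e => [pick W in E | S :&: W == e].
have pick_spec : forall e, e \in Fr -> exists W0, [/\ g e = Some W0, W0 \in E & S :&: W0 = e].
  move=> e eF; rewrite /g; case: pickP => [W0 /andP [W0E /eqP W0e] | none].
    by exists W0.
  case/red_induced: eF => /mem_induced [W WE [_ eW]] _ _.
  by have := none W; rewrite WE eW eqxx.
pose w := fun W => if (W \in E) && (S :&: W \in Fr) && (g (S :&: W) == Some W)
  then y (S :&: W) else 0.
pose t := fun x => x \in S.
have ident : forall P : pred {set V},
    \sum_(W in E | P (S :&: W)) w W = \sum_(e in Fr | P e) y e.
  move=> P; rewrite (bigID (fun W => S :&: W \in Fr)) /=.
  rewrite [X in _ + X]big1 ?addr0; last first.
    by move=> W /andP [_ nF]; rewrite /w (negbTE nF) andbF.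
  transitivity (\sum_(W in E | (S :&: W \in Fr) && P (S :&: W)) w W).
    by apply: eq_bigl => W; rewrite -andbA [X in _ && X]andbC.
  rewrite -(regroup w (fun W => S :&: W) Fr P).
  apply: eq_bigr => e /andP [eF Pe].
  have [W0 [gW0 W0E W0e]] := pick_spec e eF.
  rewrite (bigD1 W0) /=; last by rewrite W0E W0e eqxx.
  rewrite big1 ?addr0; first by rewrite /w W0E W0e eF gW0 eqxx.
  move=> W /andP [/andP [WE /eqP We] nW]; rewrite /w We gW0.
  have -> : (Some W0 == Some W) = false by apply/eqP => -[Wq]; rewrite Wq eqxx in nW.
  by rewrite andbF.
have w01 : forall W, 0 <= w W <= 1.
  move=> W; rewrite /w; case: ifP => [/andP [/andP [_ F] _]|_]; last by rewrite lexx ler01.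
  by rewrite (@pack_le1 _ _ Fr y _ py F (Fne _ F)) andbT; case: py => + _; apply.
exists w, t; split; last first.
  rewrite /milp_obj /kappa kS -yeq.
  have := ident predT; rewrite /= => h.
  transitivity (\sum_(W in E | predT (S :&: W)) w W).
    by apply: eq_bigl => W; rewrite andbT.
  by rewrite h; apply: eq_bigl => e; rewrite andbT.
split; first by move=> e _; exact: w01.
split.
  move=> x; rewrite /t; case xS: (x \in S) => /=.
    rewrite subrr mul0r addr0.
    have -> : \sum_(e in E | x \in e) w e =
        \sum_(W in E | (fun e : {set V} => x \in e) (S :&: W)) w W.
      by apply: eq_bigl => W; rewrite /= inE xS.
    rewrite (ident (fun e : {set V} => x \in e)); case: py => _; exact.
  rewrite subr0 mul1r add0r.
  apply: le_trans (@sub_sum R _ _ (fun W => W \in E) w _ _) _.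
  - by move=> W /andP [].
  - by move=> W _; case/andP: (w01 W).
  apply: le_trans hL; rewrite -sumr_const; apply: ler_sum => W _.
  by case/andP: (w01 W).
split.
  move=> W WE; rewrite /w; case: ifP => [/andP [/andP [_ F] _]|_]; last first.
    by apply: sumr_ge0 => x _; exact: ler0n.
  have /set0Pn [v] := Fne _ F; rewrite inE => /andP [vS vW].
  apply: le_trans (@pack_le1 _ _ Fr y _ py F (Fne _ F)) _.
  rewrite (bigD1 v) //= /t vS -[X in X <= _]addr0 lerD2l.
  by apply: sumr_ge0 => x _; exact: ler0n.
move=> U W UE WE z; rewrite inE => /andP [zW zU].
have sum0 : 0 <= \sum_(x in W :\: U) (t x)%:R :> R by apply: sumr_ge0 => x _; exact: ler0n.
rewrite /w; case: ifP => [/andP [/andP [_ F] _]|_]; last first.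
  rewrite /t; case: (z \in S) => /=; last by rewrite subr0 addr_ge0.
  by rewrite addrAC subrr add0r.
have y1 := @pack_le1 _ _ Fr y _ py F (Fne _ F).
rewrite /t; case zS: (z \in S) => /=; last by rewrite subr0; apply: le_trans y1 _; rewrite lerDl.
case: (boolP [exists x in W :\: U, x \in S]) => [/existsP [x /andP [xWU xS]] | nex].
  rewrite addrAC subrr add0r; apply: le_trans y1 _.
  rewrite (bigD1 x) //= /t xS -[X in X <= _]addr0 lerD2l.
  by apply: sumr_ge0 => x' _; exact: ler0n.
exfalso.
have sub : S :&: W \subset S :&: U.
  apply/fintype.subsetP => x; rewrite !inE => /andP [xS xW]; rewrite xS /=.
  apply/negPn/negP => xU; move/negP: nex; apply; apply/existsP; exists x.
  by rewrite !inE xU xW xS.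
have UI : S :&: U \in induced E S.
  apply/mem_induced; exists U => //; split => //.
  by apply/set0Pn; exists z; rewrite inE zS zU.
case/red_induced: F => _ _ /(_ _ UI) H.
have ne : S :&: U != S :&: W.
  apply/negP => /eqP eq; have : z \in S :&: W by rewrite -eq inE zS zU.
  by rewrite inE (negbTE zW) andbF.
by move/negP: (H ne).
Qed.

End Main.

Theorem theoremA2 (R : realType) (V : finType) (E : {set {set V}}) (L : R)
  (hL : (#|E|%:R : R) <= L) :
  (exists (w : {set V} -> R) (t : V -> bool),
      milp_feasible E L w t /\ milp_obj E w = kappa E) /\
  (forall (w : {set V} -> R) (t : V -> bool),
      milp_feasible E L w t -> milp_obj E w <= kappa E).
Proof.
split; first exact: lower.
move=> w t; exact: upper.
Qed.
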